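(* Let $q$ be an odd prime power, $d\ge 2$ an even integer, and $A\subset\mathbb F_q^d$. Let $\mathcal{SQ}(A)$ and $\mathcal{ZR}(A)$ be the number of pairs $(x,y)\in A\times A$ with $\eta(\|x-y\|)=1$ and with $\eta(\|x-y\|)=0$, respectively. Let $\Omega^+(A)=\sum_{m:\ \eta(\|m\|)=1}|\widehat A(m)|^2$ and $\Omega^-(A)=\sum_{m:\ \eta(\|m\|)=-1}|\widehat A(m)|^2$ (sums over $m\in\mathbb F_q^d$). Then \begin{enumerate} \item $$\mathcal{SQ}(A)+\frac{\mathcal{ZR}(A)}{2}=\frac{|A|^2}{2}+\frac{q^{d-1}G_1^{d+2}}{2}\Omega^+(A)-\frac{q^{d-1}G_1^{d+2}}{2}\Omega^-(A).$$ \item In particular, if $d\equiv 2\pmod 4$, then $$\mathcal{SQ}(A)+\frac{\mathcal{ZR}(A)}{2}=\frac{|A|^2}{2}+\frac{q^{\frac{3d}{2}}}{2}\Omega^+(A)-\frac{q^{\frac{3d}{2}}}{2}\Omega^-(A).$$ \end{enumerate}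
   Context: For $x\in\mathbb F_q^d$, $\|x\|=x_1^2+\cdots+x_d^2$. $\eta$ is the quadratic character of $\mathbb F_q$ with $\eta(0)=0$. $\chi$ is the canonical nontrivial additive character of $\mathbb F_q$; $G_1=\sum_{s\in\mathbb F_q^*}\eta(s)\chi(s)$ is the Gauss sum. For $A\subset\mathbb F_q^d$, $\widehat{A}(m)=q^{-d}\sum_{x\in A}\chi(-m\cdot x)$ is the Fourier transform of the indicator function of $A$. *)

(* Defs.v *)
From HB Require Import structures.
From mathcomp Require Import all_boot all_order all_algebra algC.
Set Implicit Arguments. Unset Strict Implicit. Unset Printing Implicit Defensive.
Import Order.TTheory GRing.Theory Num.Theory.
Local Open Scope ring_scope.

Section Defs.
Variable F : finFieldType.

(* q = |F|, p = characteristic (smallest prime divisor of q), q = p^n *)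
Definition qF : nat := #|F|.
Definition pF : nat := pdiv #|F|.
Definition nF : nat := logn pF #|F|.

(* absolute trace F -> F_p (as an element of F) *)
Definition abs_trace (x : F) : F := \sum_(i < nF) x ^+ (pF ^ i).

(* the natural number k < p with k%:R = Tr x *)
Definition trace_nat (x : F) : nat :=
  \sum_(k < pF | (k%:R : F) == abs_trace x) k.

(* canonical additive character chi(x) = exp(2 pi i Tr(x)/p);
   (pF.-root (-1)) is exp(i pi / p) in algC *)
Definition omegaF : algC := (pF.-root (-1 : algC)) ^+ 2.
Definition chi (x : F) : algC := omegaF ^+ trace_nat x.

Definition eta (x : F) : algC :=
  if x == 0 then 0 else if [exists y : F, y ^+ 2 == x] then 1 else -1.

Definition G1 : algC := \sum_(s : F | s != 0) eta s * chi s.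

Variable d : nat.

Definition vnorm (x : 'rV[F]_d) : F := \sum_(i < d) x ord0 i ^+ 2.
Definition vdot (m x : 'rV[F]_d) : F := \sum_(i < d) m ord0 i * x ord0 i.

Definition fhat (A : {set 'rV[F]_d}) (m : 'rV[F]_d) : algC :=
  (qF%:R ^+ d)^-1 * \sum_(x in A) chi (- vdot m x).

Definition SQ (A : {set 'rV[F]_d}) : nat :=
  #|[set xy in setX A A | eta (vnorm (xy.1 - xy.2)) == 1]|.
Definition ZR (A : {set 'rV[F]_d}) : nat :=
  #|[set xy in setX A A | eta (vnorm (xy.1 - xy.2)) == 0]|.

Definition OmegaP (A : {set 'rV[F]_d}) : algC :=
  \sum_(m : 'rV[F]_d | eta (vnorm m) == 1) `|fhat A m| ^+ 2.
Definition OmegaM (A : {set 'rV[F]_d}) : algC :=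
  \sum_(m : 'rV[F]_d | eta (vnorm m) == -1) `|fhat A m| ^+ 2.
End Defs.

(* Main.v *)
Require Import Defs.
From HB Require Import structures.
From mathcomp Require Import all_boot all_order all_algebra algC.
From mathcomp Require Import finalg finfield ring zify.
Set Implicit Arguments. Unset Strict Implicit. Unset Printing Implicit Defensive.
Import Order.TTheory GRing.Theory Num.Theory.
Local Open Scope ring_scope.
Section CharA.
Variable F : finFieldType.
Local Notation p := (pF F).
Local Notation n := (nF F).

Lemma pF_card : p \in [pchar F] /\ #|F| = (p ^ n)%N /\ (0 < n)%N.
Proof.
have [p0 pr pc] := finPcharP F.
have := card_pprimeChar pc => /= cF.
have cF' : #|F| = (p0 ^ logn p0 #|F|)%N by exact: cF.
have k0 : (0 < logn p0 #|F|)%N.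
  rewrite lt0n; apply/eqP => e; move: (finNzRing_gt1 F); by rewrite cF' e.
have pFe : pF F = p0.
  by rewrite /pF cF' -(prednK k0) pdiv_pfactor.
by rewrite /nF pFe; split => //.
Qed.

Lemma pF_pchar : p \in [pchar F]. Proof. by case: pF_card. Qed.
Lemma pF_prime : prime p. Proof. exact: pcharf_prime pF_pchar. Qed.
Lemma cardF_pn : #|F| = (p ^ n)%N. Proof. by case: pF_card => _ []. Qed.
Lemma nF_gt0 : (0 < n)%N. Proof. by case: pF_card => _ []. Qed.

Lemma natF_inj (k l : nat) : (k < p)%N -> (l < p)%N -> (k%:R : F) = l%:R -> k = l.
Proof.
wlog kl : k l / (k <= l)%N.
  move=> IH hk hl e; case: (leqP k l) => h; first exact: IH.
  by apply/esym/IH => //; apply: ltnW.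
move=> hk hl e.
have : (p %| l - k)%N by rewrite (dvdn_pcharf pF_pchar) natrB // e subrr.
have [lk0|lk] := eqVneq (l - k)%N 0%N.
  by move=> _; move: lk0 kl; clear; lia.
move=> dv; have h := dvdn_leq (_ : (0 < l - k)%N) dv; move: h; rewrite lt0n lk => /(_ isT) h.
exfalso; move: h hl; clear; lia.
Qed.

Lemma frob_fixed_nat (y : F) : y ^+ p = y -> exists2 k, (k < p)%N & y = k%:R.
Proof.
move=> yp.
pose S := [set (k%:R : F) | k : 'I_p].
pose R := [set x : F | root ('X^p - 'X) x].
have pgt1 := prime_gt1 pF_prime.
have cS : #|S| = p.
  rewrite card_imset ?card_ord // => a b /natF_inj e; apply/val_inj/e; apply ltn_ord.
have SR : S \subset R.
  apply/subsetP => x /imsetP [k _ ->]; rewrite inE rootE !hornerE.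
  by rewrite -(pFrobenius_autE pF_pchar) pFrobenius_aut_nat subrr.
have P0 : ('X^p - 'X : {poly F}) != 0.
  rewrite -size_poly_eq0 size_polyDl ?size_polyXn // size_polyN size_polyX ltnS //.
have cR : (#|R| <= p)%N.
  rewrite -ltnS cardE.
  have -> : p.+1 = size ('X^p - 'X : {poly F}).
    by rewrite size_polyDl ?size_polyXn // size_polyN size_polyX ltnS.
  apply: max_poly_roots => //; last exact: enum_uniq.
  by apply/allP => x; rewrite mem_enum inE.
have eSR : S =i R.
  apply/subset_cardP => //; apply/eqP; rewrite eqn_leq cS cR /=.
  by rewrite -cS subset_leq_card.
have : y \in R by rewrite inE rootE !hornerE yp subrr.
rewrite -eSR => /imsetP [k _ ->]; by exists k.
Qed.

Lemma abs_traceD (x y : F) : abs_trace (x + y) = abs_trace x + abs_trace y.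
Proof.
rewrite /abs_trace -big_split /=; apply: eq_bigr => i _.
apply: exprDn_pchar; rewrite pnatX pnatE ?pF_prime // pF_pchar; case: (i : nat) => //.
Qed.

Lemma abs_trace0 : abs_trace (0 : F) = 0.
Proof.
rewrite /abs_trace big1 // => i _; rewrite expr0n expn_eq0.
by rewrite (gtn_eqF (prime_gt0 pF_prime)).
Qed.

Lemma abs_trace_frob (x : F) : abs_trace x ^+ p = abs_trace x.
Proof.
have := cardF_pn => cF.
rewrite -(pFrobenius_autE pF_pchar) /abs_trace rmorph_sum /=.
under eq_bigr => i _ do rewrite pFrobenius_autE -exprM -expnSr.
move: cF; have := nF_gt0; case: (nF F) => // m _ cF.
rewrite big_ord_recr big_ord_recl /= -cF expf_card expn0 expr1 addrC.
by congr (_ + _); apply: eq_bigr => i _.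
Qed.

Lemma trace_natE (x : F) (k : nat) : (k < p)%N -> (k%:R : F) = abs_trace x ->
  trace_nat x = k.
Proof.
move=> kp e; rewrite /trace_nat (big_pred1 (Ordinal kp)) //= => i /=.
rewrite -e; apply/eqP/eqP => [h|->//]; apply/val_inj/natF_inj => //; exact: ltn_ord.
Qed.

Lemma trace_natP (x : F) : (trace_nat x < p)%N /\ (trace_nat x)%:R = abs_trace x.
Proof.
have [k kp e] := frob_fixed_nat (abs_trace_frob x).
by rewrite (trace_natE kp (esym e)).
Qed.

Lemma trace_natD (x y : F) : trace_nat (x + y) = ((trace_nat x + trace_nat y) %% p)%N.
Proof.
apply: trace_natE; first by rewrite ltn_mod prime_gt0 // pF_prime.
rewrite (GRing.natr_mod_pchar pF_pchar) natrD abs_traceD.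
by case: (trace_natP x) => _ ->; case: (trace_natP y) => _ ->.
Qed.

Lemma trace_nat0 : trace_nat (0 : F) = 0%N.
Proof. by apply: trace_natE; rewrite ?prime_gt0 ?pF_prime // abs_trace0. Qed.

Lemma abs_trace_nontriv : exists x : F, abs_trace x != 0.
Proof.
suff /existsP[x hx] : [exists x : F, abs_trace x != 0] by exists x.
apply: contraT; rewrite negb_exists => /forallP /= H.
have H0 (x : F) : abs_trace x = 0 by apply/eqP; move: (H x); rewrite negbK.
pose T : {poly F} := \sum_(i < n) 'X^(p ^ i).
have hT (x : F) : T.[x] = abs_trace x.
  by rewrite /T horner_sum; apply: eq_bigr => i _; rewrite hornerXn.
have pgt1 := prime_gt1 pF_prime.
have n0 := nF_gt0.
have hn : (n.-1 < n)%N by rewrite prednK.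
have T0 : T != 0.
  apply/eqP => /(congr1 (fun P : {poly F} => P`_(p ^ n.-1))).
  rewrite coef0 /T coef_sum (bigD1 (Ordinal hn)) //= coefXn eqxx big1 ?addr0.
    by move/eqP; rewrite oner_eq0.
  move=> i /eqP ne; rewrite coefXn eqn_exp2l //.
  case: eqP => // h; exfalso; apply: ne; apply/val_inj => /=; by rewrite h.
have sT : (size T <= (p ^ n.-1).+1)%N.
  apply: leq_trans (size_sum _ _ _) _; apply/bigmax_leqP => i _.
  rewrite size_polyXn ltnS leq_exp2l //; by rewrite -ltnS prednK.
have := max_poly_roots T0 (_ : all (root T) (enum F)) (enum_uniq F).
rewrite -cardE cardF_pn => /(_ _) h.
have : (p ^ n < (p ^ n.-1).+1)%N.
  apply: leq_trans sT; apply: h; apply/allP => x _; by rewrite rootE hT H0.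
rewrite ltnS leqNgt ltn_exp2l //; by rewrite prednK // leqnn.
Qed.

End CharA.

Section ChiB.
Variable F : finFieldType.
Local Notation p := (pF F).
Local Notation chi := (@chi F).

Lemma m1_neq1C : (-1 : algC) != 1.
Proof. by rewrite -subr_eq0 -opprD oppr_eq0 -(natrD _ 1 1) pnatr_eq0. Qed.

Lemma omegaF_p : omegaF F ^+ p = 1.
Proof.
by rewrite /omegaF -exprM mulnC exprM rootCK ?prime_gt0 ?pF_prime // expr2 mulrNN mulr1.
Qed.

Lemma omegaF_neq1 : omegaF F != 1.
Proof.
have pgt1 := prime_gt1 (@pF_prime F).
rewrite /omegaF sqrf_eq1; apply/norP; split.
  apply/eqP => e; have := rootCK (ltnW pgt1) (-1 : algC).
  by rewrite e expr1n => /eqP; rewrite eq_sym (negbTE m1_neq1C).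
apply/eqP => e; have := rootC_lt0 (-1 : algC) pgt1.
by rewrite e ltrN10.
Qed.

Lemma omegaF_prim : p.-primitive_root (omegaF F).
Proof.
have [m pm mp] := prim_order_exists (prime_gt0 (@pF_prime F)) omegaF_p.
have [m1|m1] := eqVneq m 1%N.
  move: pm; rewrite m1 => pm; have := prim_expr_order pm.
  by rewrite expr1 => e; move: omegaF_neq1; rewrite e eqxx.
by move/(prime_nt_dvdP (@pF_prime F) m1): mp => <-.
Qed.

Lemma chiD (x y : F) : chi (x + y) = chi x * chi y.
Proof. by rewrite /Defs.chi trace_natD expr_mod ?omegaF_p // exprD. Qed.

Lemma chi0 : chi 0 = 1.
Proof. by rewrite /Defs.chi trace_nat0. Qed.

Lemma chiNx (x : F) : chi (- x) * chi x = 1.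
Proof. by rewrite -chiD addNr chi0. Qed.

Lemma chi_neq0 (x : F) : chi x != 0.
Proof. by apply/eqP => e; have := chiNx x; rewrite e mulr0 => /eqP; rewrite eq_sym oner_eq0. Qed.

Lemma chi_sum (I : Type) (r : seq I) (P : pred I) (f : I -> F) :
  chi (\sum_(i <- r | P i) f i) = \prod_(i <- r | P i) chi (f i).
Proof. exact: (big_morph chi chiD chi0). Qed.

Lemma chi_conj (x : F) : (chi x)^* = chi (- x).
Proof.
have pgt0 := prime_gt0 (@pF_prime F).
have h1 : chi x ^+ p = 1 by rewrite /Defs.chi -exprM mulnC exprM omegaF_p expr1n.
have n1 : `|chi x| = 1.
  apply/eqP; rewrite -(pexpr_eq1 pgt0) ?normr_ge0 // -normrX h1 normr1 //.
apply: (mulfI (chi_neq0 x)); rewrite -normCK n1 expr1n mulrC chiNx //.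
Qed.

Lemma chi_nontriv : exists x : F, chi x != 1.
Proof.
have [x hx] := abs_trace_nontriv F.
exists x; rewrite /Defs.chi -(prim_order_dvd omegaF_prim).
have [lt e] := trace_natP x.
apply/negP => dv; case: (posnP (trace_nat x)) => [z|pos].
  by move: hx; rewrite -e z eqxx.
by move: (dvdn_leq pos dv); rewrite leqNgt lt.
Qed.

Lemma sum_chi : \sum_(x : F) chi x = 0.
Proof.
have [x0 h] := chi_nontriv.
have e : \sum_(x : F) chi x = chi x0 * \sum_(x : F) chi x.
  rewrite {1}(reindex_inj (addrI x0)) /= mulr_sumr; apply: eq_bigr => x _; exact: chiD.
apply/eqP; move: e => /eqP; rewrite -subr_eq0 -{1}(mul1r (\sum_x _)) -mulrBl mulf_eq0.
by rewrite subr_eq0 eq_sym (negbTE h).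
Qed.

Lemma sum_chiM (a : F) : \sum_(x : F) chi (x * a) = (a == 0)%:R * #|F|%:R.
Proof.
have [->|a0] := eqVneq a 0.
  under eq_bigr do rewrite mulr0 chi0.
  by rewrite sumr_const mul1r.
rewrite mul0r; transitivity (\sum_(x : F) chi x); last exact: sum_chi.
by rewrite [RHS](reindex_inj (mulIf a0)).
Qed.

End ChiB.

Section EtaC.
Variable F : finFieldType.
Hypothesis oddF : odd #|F|.
Local Notation q := #|F|.
Local Notation eta := (@Defs.eta F).
Local Notation h := (q.-1./2).

Lemma q_gt1 : (1 < q)%N. Proof. exact: finNzRing_gt1. Qed.

Lemma two_neq0F : (2%:R : F) != 0.
Proof.
rewrite -(dvdn_pcharf (@pF_pchar F)); apply/negP => d2.
move: d2; rewrite (dvdn_prime2 (@pF_prime F) (isT : prime 2)) => /eqP p2.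
have : (2 %| q)%N.
  rewrite cardF_pn p2; have := @nF_gt0 F; case: (nF F) => // k _.
  by rewrite expnS dvdn_mulr.
by rewrite dvdn2 oddF.
Qed.

Lemma m1_neq1F : (-1 : F) != 1.
Proof.
apply/eqP => e; move: two_neq0F; rewrite (natrD _ 1 1) -{1}e addNr eqxx //.
Qed.

Lemma twoh : (h.*2 = q.-1)%N.
Proof.
have := odd_double_half q.-1; have := oddF; rewrite -{1}(prednK (ltnW q_gt1)) /=.
by move/negbTE => ->.
Qed.

Lemma h_gt0 : (0 < h)%N.
Proof.
have := twoh; have := q_gt1; have := oddF; case: q => // [] [] // [] //=.
Qed.

Lemma expq1 (x : F) : x != 0 -> x ^+ q.-1 = 1.
Proof.
move=> xnz; apply: (mulfI xnz); rewrite -exprS prednK ?expf_card ?mulr1 //.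
exact: ltnW q_gt1.
Qed.

Definition sq (x : F) := [exists y : F, y ^+ 2 == x].

Lemma card_sqrt (t : F) : #|[set y : F | y ^+ 2 == t]| =
  if t == 0 then 1%N else if sq t then 2%N else 0%N.
Proof.
have [->|tnz] := eqVneq t 0.
  transitivity #|[set (0 : F)]|; last exact: cards1.
  apply: eq_card => y; by rewrite !inE sqrf_eq0.
case: ifP => [/existsP [y0 /eqP e]|ns].
  have y0nz : y0 != 0 by apply: contraNneq tnz => y0z; rewrite -e y0z expr0n.
  have -> : [set y : F | y ^+ 2 == t] = [set y0; -y0].
    by apply/setP => y; rewrite !inE -e eqf_sqr.
  suff ne : y0 != - y0 by rewrite cards2 ne.
  apply/eqP => ey; have : y0 *+ 2 = 0 by rewrite mulr2n {1}ey addNr.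
  by rewrite -mulr_natl => /eqP; rewrite mulf_eq0 (negbTE two_neq0F) (negbTE y0nz).
apply/eqP; rewrite cards_eq0; apply/eqP/setP => y; rewrite !inE.
apply/negbTE; apply: contraFN ns => e; by apply/existsP; exists y.
Qed.

Lemma card_sq_nz : #|[set x : F | (x != 0) && sq x]| = h.
Proof.
have e : q = (1 + #|[set x : F | (x != 0%R) && sq x]| * 2)%N.
  have -> : q = (\sum_(y : F) 1)%N by rewrite sum1_card.
  rewrite (partition_big (fun y : F => y ^+ 2) predT) //=.
  rewrite (eq_bigr (fun t => #|[set y : F | y ^+ 2 == t]|)); last first.
    by move=> t _; rewrite -sum1_card; apply: eq_bigl => y; rewrite inE.
  under eq_bigr do rewrite card_sqrt.
  rewrite (bigD1 0) //= eqxx; congr (_ + _)%N.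
  rewrite -sum_nat_const [RHS](eq_bigl (fun i => (i != 0) && sq i)); last by move=> i; rewrite inE.
  rewrite big_mkcondr /=; apply: eq_bigr => t tnz; by rewrite (negbTE tnz).
have := twoh; rewrite e /= -muln2 -(addn0 (_ * 2)%N). 
move=> e2; move: e2; set c := #|_|; clear; lia.
Qed.

Lemma euler (x : F) : x != 0 -> sq x = (x ^+ h == 1).
Proof.
move=> xnz.
pose S := [set x : F | (x != 0) && sq x].
pose R := [set x : F | root ('X^h - 1) x].
have SR : S \subset R.
  apply/subsetP => z; rewrite !inE => /andP [znz /existsP [y /eqP e]].
  have ynz : y != 0 by apply: contraNneq znz => y0; rewrite -e y0 expr0n.
  by rewrite rootE !hornerE -e -exprM mul2n twoh expq1 // subrr.
have cR : (#|R| <= h)%N.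
  rewrite -ltnS cardE -(size_Xn_sub_1 F h_gt0).
  apply: max_poly_roots; last exact: enum_uniq.
    by rewrite -size_poly_eq0 size_Xn_sub_1 // h_gt0.
  by apply/allP => z; rewrite mem_enum inE.
have eSR : S =i R.
  apply/subset_cardP => //; apply/eqP; rewrite eqn_leq card_sq_nz cR /=.
  by rewrite -card_sq_nz subset_leq_card.
have := eSR x; rewrite !inE xnz /= => ->.
by rewrite rootE !hornerE subr_eq0.
Qed.

Lemma eh_pm1 (x : F) : x != 0 -> (x ^+ h == 1) || (x ^+ h == -1).
Proof.
by move=> xnz; rewrite -sqrf_eq1 -exprM mulnC mul2n twoh expq1.
Qed.

Lemma eta0 : eta 0 = 0. Proof. by rewrite /Defs.eta eqxx. Qed.

Lemma eta_nz (x : F) : x != 0 -> eta x = if x ^+ h == 1 then 1 else -1.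
Proof. by move=> xnz; rewrite /Defs.eta (negbTE xnz) -/(sq x) euler. Qed.

Lemma etaM (x y : F) : eta (x * y) = eta x * eta y.
Proof.
have [->|xnz] := eqVneq x 0; first by rewrite mul0r eta0 mul0r.
have [->|ynz] := eqVneq y 0; first by rewrite mulr0 eta0 mulr0.
have xynz : x * y != 0 by rewrite mulf_neq0.
rewrite !eta_nz // exprMn.
have m1 := negbTE m1_neq1F.
case/orP: (eh_pm1 xnz) => /eqP ->; case/orP: (eh_pm1 ynz) => /eqP ->;
  rewrite ?mul1r ?mulr1 ?mulrNN ?mulr1 ?eqxx ?m1 //; by rewrite ?mulrNN ?mul1r ?mulr1.
Qed.

Lemma eta_sqr (y : F) : y != 0 -> eta (y ^+ 2) = 1.
Proof.
move=> ynz; rewrite /Defs.eta expf_eq0 (negbTE ynz) andbF.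
by case: existsP => // -[]; exists y.
Qed.

Lemma eta_sq1 (x : F) : x != 0 -> eta x ^+ 2 = 1.
Proof.
move=> xnz; rewrite eta_nz //; case: ifP => _; by rewrite ?expr1n ?expr2 ?mulrNN ?mulr1.
Qed.

Lemma eta1 : eta 1 = 1.
Proof. by rewrite -(expr1n _ 2) eta_sqr ?oner_neq0. Qed.

Lemma etaV (x : F) : eta (x^-1) = eta x.
Proof.
have [->|xnz] := eqVneq x 0; first by rewrite invr0.
by rewrite -[LHS]mulr1 -(eta_sq1 xnz) expr2 mulrA -etaM mulVf // eta1 mul1r.
Qed.

Lemma eta4 : eta 4 = 1.
Proof.
have -> : (4 : F) = 2%:R ^+ 2 by rewrite expr2 -natrM.
by rewrite eta_sqr // two_neq0F.
Qed.

Lemma sum_sq (f : F -> algC) : \sum_(y : F) f (y ^+ 2) = \sum_(t : F) (1 + eta t) * f t.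
Proof.
rewrite (partition_big (fun y : F => y ^+ 2) predT) //=; apply: eq_bigr => t _.
rewrite (eq_bigr (fun _ => f t)); last by move=> y /eqP ->.
transitivity (\sum_(y in [set y : F | y ^+ 2 == t]) f t).
  by apply: eq_bigl => y; rewrite inE.
rewrite sumr_const card_sqrt /Defs.eta; case: (eqVneq t 0) => _.
  by rewrite addr0 mul1r.
rewrite -/(sq t); case: ifP => _; first by rewrite mulr2n mulrDl mul1r.
by rewrite subrr mul0r mulr0n.
Qed.

Lemma sum_eta : \sum_(t : F) eta t = 0.
Proof.
have e := sum_sq (fun _ => (1 : algC)).
rewrite [RHS](eq_bigr (fun t => 1 + eta t)) in e; last by move=> *; rewrite mulr1.
rewrite big_split /= in e; move/eqP: e; rewrite -subr_eq0 opprD addrA subrr add0r oppr_eq0.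
by move/eqP.
Qed.

End EtaC.

Section GaussD.
Variable F : finFieldType.
Hypothesis oddF : odd #|F|.
Local Notation q := (#|F|%:R : algC).
Local Notation eta := (@Defs.eta F).
Local Notation chi := (@Defs.chi F).
Local Notation G := (G1 F).

Lemma G1E : G = \sum_(s : F) eta s * chi s.
Proof. by rewrite /G1 [RHS](bigD1 0) //= eta0 mul0r add0r. Qed.

Lemma gauss_t (t : F) : \sum_(s : F) eta s * chi (s * t) = eta t * G.
Proof.
have [->|tnz] := eqVneq t 0.
  under eq_bigr do rewrite mulr0 chi0 mulr1.
  by rewrite (sum_eta oddF) eta0 mul0r.
rewrite (reindex_inj (mulIf (invr_neq0 tnz))) /= G1E mulr_sumr.
apply: eq_bigr => s _; rewrite mulfVK // (etaM oddF) (etaV oddF).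
by rewrite mulrAC mulrC.
Qed.

Lemma G1_sq : G ^+ 2 = eta (-1) * q.
Proof.
rewrite expr2 {1}G1E mulr_suml.
transitivity (\sum_(t : F) \sum_(s : F) eta s * chi (t * (s + 1))).
  apply: eq_bigr => t _; rewrite -mulrA mulrCA -gauss_t mulr_sumr.
  apply: eq_bigr => s _; rewrite mulrCA; congr (_ * _).
  by rewrite -chiD mulrDr mulr1 addrC mulrC.
rewrite exchange_big /=.
under eq_bigr do rewrite -mulr_sumr sum_chiM addr_eq0.
rewrite (bigD1 (-1)) //= eqxx mul1r big1 ?addr0 // => s ns.
by rewrite (negbTE ns) mul0r mulr0.
Qed.

Lemma eta_m1_sq : eta (-1) ^+ 2 = 1.
Proof. by apply: (eta_sq1 oddF); rewrite oppr_eq0 oner_neq0. Qed.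

Lemma eta_m1_neq0 : eta (-1) != 0.
Proof. by apply/eqP => e; have := eta_m1_sq; rewrite e expr0n => /eqP; rewrite eq_sym oner_eq0. Qed.

Lemma q_neq0 : q != 0.
Proof. by rewrite pnatr_eq0 -lt0n; apply: ltnW (q_gt1 F). Qed.

Lemma G1_neq0 : G != 0.
Proof.
apply/eqP => e; have := G1_sq; rewrite e expr0n => /eqP.
by rewrite eq_sym mulf_eq0 (negbTE eta_m1_neq0) (negbTE q_neq0).
Qed.

Lemma gauss_quad (s : F) : s != 0 -> \sum_(z : F) chi (s * z ^+ 2) = eta s * G.
Proof.
move=> snz; rewrite (sum_sq oddF (fun t => chi (s * t))).
under eq_bigr do rewrite mulrDl mul1r.
rewrite big_split /=.
under eq_bigr do rewrite mulrC.
rewrite sum_chiM (negbTE snz) mul0r add0r -gauss_t.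
by apply: eq_bigr => t _; rewrite (mulrC s).
Qed.

Lemma gauss_quad_lin (s m : F) : s != 0 ->
  \sum_(z : F) chi (s * z ^+ 2 - m * z) = eta s * G * chi (- (m ^+ 2) / (4 * s)).
Proof.
move=> snz; rewrite (reindex_inj (addrI (m / (2%:R * s)))) /=.
have two := two_neq0F oddF.
have e z : s * (m / (2%:R * s) + z) ^+ 2 - m * (m / (2%:R * s) + z)
    = s * z ^+ 2 + (- (m ^+ 2) / (4 * s)).
  have four : (4%:R : F) != 0 by rewrite (natrM _ 2 2) mulf_neq0.
  by field; rewrite snz four two.
rewrite (eq_bigr (fun z => chi (s * z ^+ 2) * chi (- (m ^+ 2) / (4 * s)))).
  by rewrite -mulr_suml gauss_quad.
by move=> z _; rewrite e chiD.
Qed.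

End GaussD.

Section VecE.
Variable F : finFieldType.
Hypothesis oddF : odd #|F|.
Variable d : nat.
Hypothesis evend : ~~ odd d.
Local Notation q := (#|F|%:R : algC).
Local Notation eta := (@Defs.eta F).
Local Notation chi := (@Defs.chi F).
Local Notation G := (G1 F).
Local Notation vnorm := (@vnorm F d).
Local Notation vdot := (@vdot F d).

Lemma sum_rV_prod (f : 'I_d -> F -> algC) :
  \sum_(z : 'rV[F]_d) \prod_(i < d) f i (z ord0 i) = \prod_(i < d) \sum_(t : F) f i t.
Proof.
rewrite bigA_distr_bigA /=.
rewrite (reindex (fun z : 'rV[F]_d => [ffun i => z ord0 i])) /=.
  by apply: eq_bigr => z _; apply: eq_bigr => i _; rewrite ffunE.
exists (fun g : {ffun 'I_d -> F} => \row_i g i) => [z _|g _].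
  by apply/rowP => i; rewrite mxE ffunE.
by apply/ffunP => i; rewrite ffunE mxE.
Qed.

Lemma orth (w : 'rV[F]_d) :
  \sum_(m : 'rV[F]_d) chi (vdot m w) = (w == 0)%:R * q ^+ d.
Proof.
transitivity (\sum_(m : 'rV[F]_d) \prod_(i < d) (fun i t => chi (t * w ord0 i)) i (m ord0 i)).
  by apply: eq_bigr => m _; rewrite /Defs.vdot chi_sum.
rewrite (sum_rV_prod (fun i t => chi (t * w ord0 i))) /=.
under eq_bigr do rewrite sum_chiM.
have [->|wnz] := eqVneq w 0.
  under eq_bigr do rewrite mxE eqxx mul1r.
  by rewrite prodr_const card_ord mul1r.
have [i wi] : exists i, w ord0 i != 0.
  apply/existsP; apply: contraNT wnz; rewrite negb_exists => /forallP H.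
  apply/eqP/rowP => i; rewrite mxE; move: (H i); by rewrite negbK => /eqP.
by rewrite (bigD1 i) //= (negbTE wi) !mul0r.
Qed.

Lemma eta_pow_d (s : F) : s != 0 -> eta s ^+ d = 1.
Proof.
move=> snz; rewrite -(odd_double_half d) (negbTE evend) add0n -muln2 mulnC exprM.
by rewrite (eta_sq1 oddF snz) expr1n.
Qed.

Lemma chi_quad_vec (s : F) (m : 'rV[F]_d) : s != 0 ->
  \sum_(z : 'rV[F]_d) chi (s * vnorm z - vdot m z) = G ^+ d * chi (- vnorm m / (4 * s)).
Proof.
move=> snz.
transitivity (\sum_(z : 'rV[F]_d) \prod_(i < d)
   (fun i t => chi (s * t ^+ 2 - m ord0 i * t)) i (z ord0 i)).
  apply: eq_bigr => z _; rewrite /Defs.vnorm /Defs.vdot mulr_sumr -sumrB chi_sum.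
  by apply: eq_bigr => i _; rewrite mulrC.
rewrite (sum_rV_prod (fun i t => chi (s * t ^+ 2 - m ord0 i * t))) /=.
under eq_bigr do rewrite (gauss_quad_lin oddF _ snz).
rewrite big_split /= prodr_const card_ord exprMn (eta_pow_d snz) mul1r.
congr (_ * _); rewrite -chi_sum; congr (chi _).
by rewrite /Defs.vnorm -sumrN mulr_suml.
Qed.

Lemma etaE (t : F) : eta t = G^-1 * \sum_(s : F) eta s * chi (s * t).
Proof. by rewrite (gauss_t oddF) mulrC mulfK // (G1_neq0 oddF). Qed.

Definition iota4 (u : F) : F := - (4 * u)^-1.

Lemma iota4K : involutive iota4.
Proof.
have four : (4%:R : F) != 0 by rewrite (natrM _ 2 2) mulf_neq0 // (two_neq0F oddF).
move=> u; rewrite /iota4; have [->|unz] := eqVneq u 0.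
  by rewrite !(mulr0, invr0, oppr0).
by field; rewrite unz four oppr_eq0 oner_neq0.
Qed.

Lemma S_formula (m : 'rV[F]_d) :
  \sum_(z : 'rV[F]_d) eta (vnorm z) * chi (- vdot m z) = G ^+ d * eta (-1) * eta (vnorm m).
Proof.
have four : (4%:R : F) != 0 by rewrite (natrM _ 2 2) mulf_neq0 // (two_neq0F oddF).
have GN := G1_neq0 oddF.
transitivity (G^-1 * \sum_(s : F) eta s * (G ^+ d * chi (- vnorm m / (4 * s)))).
  under eq_bigr do rewrite etaE -mulrA mulr_suml.
  rewrite -mulr_sumr exchange_big /=; congr (_ * _); apply: eq_bigr => s _.
  have [->|snz] := eqVneq s 0; first by rewrite eta0; under eq_bigr do rewrite !mul0r; rewrite big1 ?mul0r.
  rewrite -(chi_quad_vec _ snz) mulr_sumr; apply: eq_bigr => z _.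
  by rewrite -mulrA -chiD.
rewrite (reindex_inj (can_inj iota4K)) /=.
transitivity (G^-1 * G ^+ d * eta (-1) * \sum_(u : F) eta u * chi (u * vnorm m)).
  rewrite -!mulrA; congr (_ * _); rewrite mulr_sumr mulr_sumr; apply: eq_bigr => u _.
  rewrite /iota4 (_ : - (4 * u)^-1 = -1 * (4 * u)^-1); last by rewrite mulN1r.
  rewrite (etaM oddF) (etaV oddF) (etaM oddF) (eta4 oddF) mul1r.
  have -> : - vnorm m / (4 * (-1 * (4 * u)^-1)) = u * vnorm m.
    have [->|unz] := eqVneq u 0; first by rewrite !(mulr0, invr0, mul0r).
    by field; rewrite unz four ?oppr_eq0 ?oner_neq0.
  by ring.
rewrite (gauss_t oddF); field; exact: GN.
Qed.

End VecE.

Section MainF.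
Variable F : finFieldType.
Hypothesis oddF : odd #|F|.
Variable d : nat.
Hypothesis evend : ~~ odd d.
Local Notation q := (#|F|%:R : algC).
Local Notation eta := (@Defs.eta F).
Local Notation chi := (@Defs.chi F).
Local Notation G := (G1 F).
Local Notation vnorm := (@vnorm F d).
Local Notation vdot := (@vdot F d).

Lemma vdotB (m x y : 'rV[F]_d) : vdot m (x - y) = vdot m x - vdot m y.
Proof. by rewrite /Defs.vdot -sumrB; apply: eq_bigr => i _; rewrite !mxE mulrBr. Qed.

Lemma vnormN (x : 'rV[F]_d) : vnorm (- x) = vnorm x.
Proof. by rewrite /Defs.vnorm; apply: eq_bigr => i _; rewrite mxE sqrrN. Qed.

Lemma qd_neq0 : q ^+ d != 0.
Proof. by rewrite expf_neq0 // (@q_neq0 F). Qed.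

Lemma fhat_norm2 (A : {set 'rV[F]_d}) (m : 'rV[F]_d) :
  (q ^+ d) ^+ 2 * `|fhat A m| ^+ 2 =
  (\sum_(x in A) chi (- vdot m x)) * (\sum_(y in A) chi (vdot m y)).
Proof.
rewrite normCK /fhat /qF rmorphM fmorphV rmorphXn rmorph_nat rmorph_sum /=.
under [X in _ * (_ * X)]eq_bigr do rewrite chi_conj opprK.
have := qd_neq0; set Q := q ^+ d; set T := \sum_(x in A) _; set T' := \sum_(y in A) _.
move=> QN; by field.
Qed.

Lemma key_identity (A : {set 'rV[F]_d}) :
  \sum_(m : 'rV[F]_d) (\sum_(z : 'rV[F]_d) eta (vnorm z) * chi (- vdot m z)) *
     ((\sum_(x in A) chi (- vdot m x)) * (\sum_(y in A) chi (vdot m y)))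
  = q ^+ d * \sum_(x in A) \sum_(y in A) eta (vnorm (x - y)).
Proof.
transitivity (\sum_(m : 'rV[F]_d) \sum_(z : 'rV[F]_d) \sum_(x in A) \sum_(y in A)
    eta (vnorm z) * chi (vdot m (y - x - z))).
  apply: eq_bigr => m _; rewrite mulr_suml; apply: eq_bigr => z _.
  rewrite mulr_suml mulr_sumr; apply: eq_bigr => x _.
  rewrite mulr_sumr mulr_sumr; apply: eq_bigr => y _.
  by rewrite !vdotB -mulrA -!chiD; congr (_ * chi _); ring.
transitivity (\sum_(z : 'rV[F]_d) \sum_(x in A) \sum_(y in A)
    eta (vnorm z) * ((y - x - z == 0)%:R * q ^+ d)).
  rewrite exchange_big; apply: eq_bigr => z _.
  rewrite exchange_big; apply: eq_bigr => x _.
  rewrite exchange_big; apply: eq_bigr => y _.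
  by rewrite -mulr_sumr orth.
rewrite exchange_big /=; under eq_bigr do rewrite exchange_big /=.
rewrite mulr_sumr; apply: eq_bigr => x _; rewrite mulr_sumr; apply: eq_bigr => y _.
rewrite (bigD1 (y - x)) //= subrr eqxx mul1r big1 ?addr0.
  by rewrite -vnormN opprB mulrC.
move=> z nz; rewrite subr_eq0 eq_sym (negbTE nz) mul0r mulr0 //.
Qed.

Lemma main_sum (A : {set 'rV[F]_d}) : (0 < d)%N ->
  \sum_(x in A) \sum_(y in A) eta (vnorm (x - y)) =
  q ^+ (d - 1) * G ^+ (d + 2) * \sum_(m : 'rV[F]_d) eta (vnorm m) * `|fhat A m| ^+ 2.
Proof.
move=> d0.
set X := \sum_(x in A) _.
have key : \sum_(m : 'rV[F]_d) G ^+ d * eta (-1) * eta (vnorm m) * ((q ^+ d) ^+ 2 * `|fhat A m| ^+ 2)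
   = q ^+ d * X.
  rewrite -key_identity; apply: eq_bigr => m _.
  by rewrite (S_formula oddF evend) fhat_norm2.
have e1 : eta (-1) = G ^+ 2 / q by rewrite (G1_sq oddF) mulfK // (@q_neq0 F).
rewrite e1 in key.
set Y := \sum_m _.
have kY : \sum_(m : 'rV[F]_d) G ^+ d * (G ^+ 2 / q) * eta (vnorm m) * ((q ^+ d) ^+ 2 * `|fhat A m| ^+ 2)
   = G ^+ d * (G ^+ 2 / q) * (q ^+ d) ^+ 2 * Y.
  rewrite /Y !mulr_sumr; apply: eq_bigr => m _; ring.
rewrite kY in key.
have QN := @q_neq0 F.
have e2 : q ^+ d = q * q ^+ (d - 1) by rewrite -exprS subn1 prednK.
rewrite e2 in key; rewrite exprD.
have QdN : q ^+ (d - 1) != 0 by rewrite expf_neq0.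
apply: (mulfI (mulf_neq0 QN QdN)); rewrite -key.
by field.
Qed.

End MainF.

Lemma card_pairs (F : finFieldType) (d : nat) (A : {set 'rV[F]_d})
    (P : 'rV[F]_d -> 'rV[F]_d -> bool) :
  (#|[set xy in setX A A | P xy.1 xy.2]|%:R : algC) =
  \sum_(x in A) \sum_(y in A) (P x y)%:R.
Proof.
rewrite -sum1_card natr_sum pair_big /= big_mkcond [RHS]big_mkcond.
apply: eq_bigr => -[x y] _; rewrite !inE /=.
by case: (x \in A); case: (y \in A); case: (P x y).
Qed.

Lemma eta_cases (F : finFieldType) (t : F) :
  Defs.eta t = 0 \/ Defs.eta t = 1 \/ Defs.eta t = -1.
Proof. rewrite /Defs.eta; case: ifP => _; [by left|right]; case: ifP => _; by [left|right]. Qed.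

Lemma two_neq0C : (2%:R : algC) != 0. Proof. by rewrite pnatr_eq0. Qed.

Lemma m1_neq0C : (-1 : algC) != 0. Proof. by rewrite oppr_eq0 oner_neq0. Qed.

Lemma pt_count (e : algC) : e = 0 \/ e = 1 \/ e = -1 ->
  (e == 1)%:R + (e == 0)%:R / 2 = 1 / 2 + e / 2.
Proof.
have t2 := two_neq0C.
have z1 : ((0:algC) == 1) = false by rewrite eq_sym oner_eq0.
case=> [->|[->|->]]; rewrite ?z1 ?eqxx ?oner_eq0 ?(negbTE m1_neq1C) ?(negbTE m1_neq0C) /=;
  by field.
Qed.

Lemma split_sign (e g : algC) : e = 0 \/ e = 1 \/ e = -1 ->
  e * g = (if e == 1 then g else 0) - (if e == -1 then g else 0).
Proof.
have m1 := m1_neq1C.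
have z1 : ((0:algC) == 1) = false by rewrite eq_sym oner_eq0.
have z2 : ((0:algC) == -1) = false by rewrite eq_sym (negbTE m1_neq0C).
have z3 : ((1:algC) == -1) = false by rewrite eq_sym (negbTE m1).
case=> [->|[->|->]]; rewrite ?z1 ?z2 ?z3 ?eqxx ?(negbTE m1) /=.
- by rewrite mul0r subrr.
- by rewrite mul1r subr0.
- by rewrite mulN1r sub0r.
Qed.

Unset Implicit Arguments.
Set Strict Implicit.

Theorem proposition3p3 (F : finFieldType) (d : nat) (A : {set 'rV[F]_d}) :
  odd #|F| -> (2 <= d)%N -> ~~ odd d ->
  ((SQ A)%:R + (ZR A)%:R / 2
     = (#|A|%:R ^+ 2) / 2
       + (qF F)%:R ^+ (d - 1) * (G1 F) ^+ (d + 2) / 2 * OmegaP A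
       - (qF F)%:R ^+ (d - 1) * (G1 F) ^+ (d + 2) / 2 * OmegaM A :> algC)
  /\
  ((d %% 4)%N = 2%N ->
   (SQ A)%:R + (ZR A)%:R / 2
     = (#|A|%:R ^+ 2) / 2
       + (qF F)%:R ^+ (3 * d %/ 2) / 2 * OmegaP A
       - (qF F)%:R ^+ (3 * d %/ 2) / 2 * OmegaM A :> algC).
Proof.
move=> oddF d2 evend.
have d0 : (0 < d)%N by apply: leq_trans d2.
have t2 := two_neq0C.
have part1 : (SQ A)%:R + (ZR A)%:R / 2
     = (#|A|%:R ^+ 2) / 2
       + (qF F)%:R ^+ (d - 1) * (G1 F) ^+ (d + 2) / 2 * OmegaP A
       - (qF F)%:R ^+ (d - 1) * (G1 F) ^+ (d + 2) / 2 * OmegaM A :> algC.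
  have hSQ := card_pairs A (fun x y => Defs.eta (vnorm (x - y)) == 1).
  have hZR := card_pairs A (fun x y => Defs.eta (vnorm (x - y)) == 0).
  rewrite /SQ /ZR hSQ hZR /=.
  have hA : (#|A|%:R : algC) ^+ 2 = \sum_(x in A) \sum_(y in A) 1.
    under eq_bigr do rewrite sumr_const.
    by rewrite sumr_const expr2 mulr_natr.
  have hY : \sum_(m : 'rV[F]_d) Defs.eta (vnorm m) * `|fhat A m| ^+ 2 = OmegaP A - OmegaM A.
    rewrite /OmegaP /OmegaM (big_mkcond (fun m => Defs.eta (vnorm m) == 1)).
    rewrite (big_mkcond (fun m => Defs.eta (vnorm m) == -1)) -sumrB.
    by apply: eq_bigr => m _; apply: split_sign; apply: eta_cases.
  transitivity (\sum_(x in A) \sum_(y in A) (1 / 2 + Defs.eta (vnorm (x - y)) / 2)).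
    rewrite mulr_suml -big_split; apply: eq_bigr => x _.
    rewrite mulr_suml -big_split; apply: eq_bigr => y _.
    by apply: pt_count; apply: eta_cases.
  under eq_bigr do rewrite big_split /= -!mulr_suml.
  rewrite big_split /= -!mulr_suml -hA (main_sum oddF evend A d0) hY /qF.
  by field.
split => // d4.
rewrite part1.
have [j dj] : exists j, d = (4 * j + 2)%N.
  by exists (d %/ 4)%N; rewrite {1}(divn_eq d 4) d4 mulnC.
have eG : G1 F ^+ (d + 2) = (qF F)%:R ^+ (2 * j + 2).
  have -> : (d + 2 = 2 * 2 * (j + 1))%N by rewrite dj; lia.
  rewrite !exprM (G1_sq oddF) [_ ^+ 2]exprMn (eta_m1_sq oddF) mul1r -!exprM /qF.
  by congr (_ ^+ _); rewrite mulnDr muln1.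
have ee : (3 * d %/ 2 = (d - 1) + (2 * j + 2))%N by rewrite dj; lia.
by rewrite eG -exprD -ee.
Qed.
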